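(* Suppose that $\mathrm{rot}(\mathcal G)$ is finite and $\mathcal R\subset\mathcal G$ has Property 2. Then $\ker(\|\cdot\|_{\mathcal R})=U_{\mathrm{iso},0,0}$. Moreover, with $d_3=d-d_{\mathrm{aff}}$ and $d_4=d_{\mathrm{aff}}-d_2$, the map \[\mathbb R^d\times\mathbb R^{d_3\times d_4}\times\mathrm{Skew}(d_4)\to\ker(\|\cdot\|_{\mathcal R}),\quad(a,A_1,A_2)\mapsto\Big(g\mapsto\mathrm{rot}(g)^T\Big(a+\Big(\begin{pmatrix}0&A_1\\-A_1^T&A_2\end{pmatrix}\oplus0_{d_2\times d_2}\Big)(g\cdot x_0-x_0)\Big)\Big)\] is a linear isomorphism; in particular $\dim\ker(\|\cdot\|_{\mathcal R})=d+d_4(d_3+d_1-1)/2$.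
   Context: Euclidean group: $\mathrm E(n)$ consists of pairs $(A|b)$, $A\in\mathrm O(n)$, $b\in\mathbb R^n$, acting by $(A|b)\cdot x=Ax+b$, product $(A_1|b_1)(A_2|b_2)=(A_1A_2|b_1+A_1b_2)$; $\mathrm{rot}(A|b)=A$. Standing setting: $d=d_1+d_2$; $\mathcal S<\mathrm E(d_2)$ is a space group with translation subgroup $\mathcal T_{\mathcal S}$; $A\oplus(B|b)=(\mathrm{diag}(A,B)|(0,b))$; $\mathcal G$ is a discrete subgroup of $\mathrm E(d)$ contained in $\{A\oplus s:A\in\mathrm O(d_1),s\in\mathcal S\}$ projecting onto $\mathcal S$; $\mathcal T\subset\mathcal G$ maps bijectively onto $\mathcal T_{\mathcal S}$. There is $m_0\in\mathbb N$ such that $\mathcal T^N=\{t^N:t\in\mathcal T\}$ is a normal subgroup iff $N\in\mathcal M=m_0\mathbb N$, then isomorphic to $\mathbb Z^{d_2}$ of finite index; $\mathcal C_N$ is a fixed set of representatives of $\mathcal G/\mathcal T^N$. $U_{\mathrm{per}}$: maps $u:\mathcal G\to\mathbb R^d$ that are $\mathcal T^N$-periodic ($u(gt)=u(g)$ for $t\in\mathcal T^N$) for some $N\in\mathcal M$. $x_0\in\mathbb R^d$ with $g\mapsto g\cdot x_0$ injective; $d_{\mathrm{aff}}=\dim\mathrm{aff}(\mathcal G\cdot x_0)$; assumed $\mathcal G\cdot x_0\subset\{0_{d-d_{\mathrm{aff}}}\}\times\mathbb R^{d_{\mathrm{aff}}}$ and $\mathcal G$ acts trivially on $\mathbb R^{d-d_{\mathrm{aff}}}\times\{0\}$.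 For $\mathcal R\subset\mathcal G$, $U_{\mathrm{iso}}(\mathcal R)$: maps $v:\mathcal R\to\mathbb R^d$ with $a\in\mathbb R^d$, $S\in\mathrm{Skew}(d)$ such that $\mathrm{rot}(g)v(g)=a+S(g\cdot x_0-x_0)$ on $\mathcal R$. For finite $\mathcal R$ and $\mathcal T^N$-periodic $u$: $\|u\|_{\mathcal R}=\big(\frac1{|\mathcal C_N|}\sum_{g\in\mathcal C_N}\mathrm{dist}(u(g\,\cdot)|_{\mathcal R},U_{\mathrm{iso}}(\mathcal R))^2\big)^{1/2}$. $U_{\mathrm{iso},0,0}$: maps $u:\mathcal G\to\mathbb R^d$ with $a\in\mathbb R^d$, $S\in\mathrm{Skew}(d_1)$ such that $\mathrm{rot}(g)u(g)=a+(S\oplus0_{d_2\times d_2})(g\cdot x_0-x_0)$ for all $g\in\mathcal G$. Property 1: $\mathcal R$ finite, $\mathrm{id}\in\mathcal R$, $\mathrm{aff}(\mathcal R\cdot x_0)=\mathrm{aff}(\mathcal G\cdot x_0)$. Property 2: $\mathcal R$ finite, and there are $\mathcal R',\mathcal R''$ with $\mathrm{id}\in\mathcal R'$, $\mathcal R'$ generating $\mathcal G$, $\mathcal R''$ with Property 1, and $\{gh:g\in\mathcal R',h\in\mathcal R''\}\subset\mathcal R$. *)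

(* Defs.v *)
From HB Require Import structures.
From mathcomp Require Import all_boot all_order all_algebra.
From mathcomp Require Import boolp classical_sets cardinality reals.
Set Implicit Arguments.
Unset Strict Implicit.
Unset Printing Implicit Defensive.
Import Order.TTheory GRing.Theory Num.Theory.
Local Open Scope ring_scope.
Local Open Scope classical_set_scope.

Section EuclDefs.
Variable R : realType.

(* E(n): pairs (A|b); validity (A orthogonal) is imposed by [subgroup]. *)
Definition Eucl (n : nat) := ('M[R]_n * 'cV[R]_n)%type.
Definition erot n (g : Eucl n) : 'M[R]_n := g.1.
Definition etrans n (g : Eucl n) : 'cV[R]_n := g.2.
Definition emul n (g h : Eucl n) : Eucl n := (g.1 *m h.1, g.2 + g.1 *m h.2).
Definition eone n : Eucl n := (1%:M, 0).
Definition einv n (g : Eucl n) : Eucl n := (g.1^T, - (g.1^T *m g.2)).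
Definition eact n (g : Eucl n) (x : 'cV[R]_n) : 'cV[R]_n := g.1 *m x + g.2.
Definition epow n (g : Eucl n) (N : nat) : Eucl n := iter N (emul g) (eone n).

Definition orthogonal_mx n (A : 'M[R]_n) := A *m A^T = 1%:M.
Definition skew_mx n (A : 'M[R]_n) := A^T = - A.

Definition dsum n1 n2 (A : 'M[R]_n1) (s : Eucl n2) : Eucl (n1 + n2) :=
  (block_mx A 0 0 s.1, col_mx 0 s.2).
Definition sproj n1 n2 (g : Eucl (n1 + n2)) : Eucl n2 := (drsubmx g.1, dsubmx g.2).

Definition subgroup n (G : set (Eucl n)) :=
  [/\ G (eone n), (forall g h, G g -> G h -> G (emul g h)),
      (forall g, G g -> G (einv g)) & (forall g, G g -> orthogonal_mx (erot g))].

Definition normal_subgroup n (H G : set (Eucl n)) :=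
  [/\ subgroup H, H `<=` G &
      forall g h, G g -> H h -> H (emul (emul g h) (einv g))].

(* discrete: every element is isolated (topology of O(n) x R^n inside R^(n*n+n)) *)
Definition discrete_set n (G : set (Eucl n)) :=
  forall g, G g -> exists2 eps : R, 0 < eps &
    forall h, G h -> (forall i j, `|erot h i j - erot g i j| < eps) ->
      (forall i, `|etrans h i ord0 - etrans g i ord0| < eps) -> h = g.

Definition sqnorm n (x : 'cV[R]_n) : R := \sum_i x i ord0 ^+ 2.

(* space group: discrete cocompact subgroup of E(n)
   (cocompact: R^n is covered by the S-translates of a closed ball) *)
Definition space_group n (S : set (Eucl n)) :=
  [/\ subgroup S, discrete_set S &
      exists r : R, forall x : 'cV[R]_n, exists2 s, S s & sqnorm (x - eact s 0) <= r ^+ 2].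

Definition transl_subgroup n (S : set (Eucl n)) : set (Eucl n) :=
  [set s | S s /\ erot s = 1%:M].

Definition powset n (T : set (Eucl n)) (N : nat) : set (Eucl n) :=
  [set epow t N | t in T].

Definition reps n (G H : set (Eucl n)) (C : seq (Eucl n)) :=
  [/\ uniq C, (forall c, c \in C -> G c),
      (forall g, G g -> exists2 c, c \in C & H (emul (einv c) g)) &
      (forall c1 c2, c1 \in C -> c2 \in C -> H (emul (einv c1) c2) -> c1 = c2)].

Definition in_M n (G T : set (Eucl n)) (N : nat) :=
  (0 < N)%N /\ normal_subgroup (powset T N) G.

Definition periodic n (G H : set (Eucl n)) (u : Eucl n -> 'cV[R]_n) :=
  forall g t, G g -> H t -> u (emul g t) = u g.

Definition Uiso n (x0 : 'cV[R]_n) (Rs : seq (Eucl n)) (v : Eucl n -> 'cV[R]_n) :=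
  exists a : 'cV[R]_n, exists2 S : 'M[R]_n, skew_mx S &
    forall h, h \in Rs -> erot h *m v h = a + S *m (eact h x0 - x0).

Definition dist_iso n (x0 : 'cV[R]_n) (Rs : seq (Eucl n)) (v : Eucl n -> 'cV[R]_n) : R :=
  inf [set Num.sqrt (\sum_(h <- Rs) sqnorm (v h - w h)) | w in Uiso x0 Rs].

(* ||u||_R computed with the representatives C = C_N *)
Definition normR n (x0 : 'cV[R]_n) (Rs : seq (Eucl n)) (C : seq (Eucl n))
  (u : Eucl n -> 'cV[R]_n) : R :=
  Num.sqrt ((size C)%:R^-1 *
            \sum_(g <- C) (dist_iso x0 Rs (fun h => u (emul g h))) ^+ 2).

Definition ker_norm n (G T : set (Eucl n)) (C : nat -> seq (Eucl n)) (x0 : 'cV[R]_n)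
  (Rs : seq (Eucl n)) (u : Eucl n -> 'cV[R]_n) :=
  exists N, [/\ in_M G T N, periodic G (powset T N) u & normR x0 Rs (C N) u = 0].

Definition Uiso00 n1 n2 (G : set (Eucl (n1 + n2))) (x0 : 'cV[R]_(n1 + n2))
  (u : Eucl (n1 + n2) -> 'cV[R]_(n1 + n2)) :=
  exists a : 'cV[R]_(n1 + n2), exists2 S : 'M[R]_n1, skew_mx S &
    forall g, G g -> erot g *m u g = a + block_mx S 0 0 (0 : 'M[R]_n2) *m (eact g x0 - x0).

Definition eorbit n (G : set (Eucl n)) (x0 : 'cV[R]_n) : set 'cV[R]_n :=
  [set eact g x0 | g in G].

Definition aff_hull n (A : set 'cV[R]_n) : set 'cV[R]_n :=
  [set x | exists m (c : 'I_m -> R) (p : 'I_m -> 'cV[R]_n),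
     [/\ forall i, A (p i), \sum_i c i = 1 & x = \sum_i c i *: p i]].

Definition lin_indep n k (b : 'I_k -> 'cV[R]_n) :=
  forall c : 'I_k -> R, \sum_i c i *: b i = 0 -> forall i, c i = 0.

Definition aff_dim n (A : set 'cV[R]_n) (k : nat) :=
  exists (a0 : 'cV[R]_n) (b : 'I_k -> 'cV[R]_n), lin_indep b /\
    aff_hull A = [set a0 + \sum_i c i *: b i | c in [set: 'I_k -> R]].

Definition prop1 n (G : set (Eucl n)) (x0 : 'cV[R]_n) (Rr : set (Eucl n)) :=
  [/\ Rr `<=` G, finite_set Rr, Rr (eone n) &
      aff_hull (eorbit Rr x0) = aff_hull (eorbit G x0)].

Definition eprod n (l : seq (Eucl n * bool)) : Eucl n :=
  foldr (fun p acc => emul (if p.2 then p.1 else einv p.1) acc) (eone n) l.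

Definition generates n (G Rr : set (Eucl n)) :=
  Rr `<=` G /\
  forall g, G g -> exists l : seq (Eucl n * bool), (forall p, p \in l -> Rr p.1) /\ g = eprod l.

Definition prop2 n (G : set (Eucl n)) (x0 : 'cV[R]_n) (Rs : seq (Eucl n)) :=
  [/\ uniq Rs, (forall h, h \in Rs -> G h) &
    exists R' R'' : set (Eucl n),
      [/\ R' (eone n), generates G R', prop1 G x0 R'' &
          forall g h, R' g -> R'' h -> emul g h \in Rs]].

Definition Phi d3 d4 d2 (x0 : 'cV[R]_((d3 + d4) + d2)) (a : 'cV[R]_((d3 + d4) + d2))
  (A1 : 'M[R]_(d3, d4)) (A2 : 'M[R]_d4) (g : Eucl ((d3 + d4) + d2)) : 'cV[R]_((d3 + d4) + d2) :=
  (erot g)^T *m (a + block_mx (block_mx 0 A1 (- A1^T) A2) 0 0 (0 : 'M[R]_d2) *m (eact g x0 - x0)).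

(* P (a set of maps G -> R^n, identified when equal on G) is a linear space of dimension k *)
Definition fun_space_dim n (G : set (Eucl n)) (P : (Eucl n -> 'cV[R]_n) -> Prop) (k : nat) :=
  exists b : 'I_k -> (Eucl n -> 'cV[R]_n),
    [/\ forall c : 'I_k -> R, P (fun g => \sum_i c i *: b i g),
        (forall c : 'I_k -> R, (forall g, G g -> \sum_i c i *: b i g = 0) -> forall i, c i = 0) &
        (forall u, P u -> exists c : 'I_k -> R, forall g, G g -> u g = \sum_i c i *: b i g)].

End EuclDefs.

(* Main.v *)
Require Import Defs.
From HB Require Import structures.
From mathcomp Require Import all_boot all_order all_algebra.
From mathcomp Require Import boolp classical_sets cardinality reals.
From mathcomp Require Import ring lra zify.
Set Implicit Arguments.
Unset Strict Implicit.
Unset Printing Implicit Defensive.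
Import Order.TTheory GRing.Theory Num.Theory.
Local Open Scope ring_scope.
Local Open Scope classical_set_scope.

Section Basics.
Variable R : realType.
Variable n : nat.
Implicit Types g h k : Eucl R n.

Lemma emulA g h k : emul (emul g h) k = emul g (emul h k).
Proof. by rewrite /emul /=; congr pair; rewrite ?mulmxA // mulmxDr mulmxA addrA. Qed.

Lemma emul1g g : emul (eone R n) g = g.
Proof. by case: g => a b; rewrite /emul /eone /= !mul1mx add0r. Qed.

Lemma emulg1 g : emul g (eone R n) = g.
Proof. by case: g => a b; rewrite /emul /eone /= mulmx1 mulmx0 addr0. Qed.

Lemma orthT (A : 'M[R]_n) : orthogonal_mx A -> A^T *m A = 1%:M.
Proof. by move=> h; apply: mulmx1C. Qed.

Lemma emulV g : orthogonal_mx g.1 -> emul g (einv g) = eone R n.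
Proof.
by case: g => a b /= h; rewrite /emul /einv /eone /= h mulmxN mulmxA h mul1mx subrr.
Qed.

Lemma emulVg g : orthogonal_mx g.1 -> emul (einv g) g = eone R n.
Proof.
by case: g => a b /= h; rewrite /emul /einv /eone /= orthT // addrC subrr.
Qed.

Lemma einvK g : orthogonal_mx g.1 -> einv (einv g) = g.
Proof.
case: g => a b /= h; rewrite /einv /= trmxK mulmxN mulmxA h mul1mx opprK //.
Qed.

Lemma eact_mul g h x : eact (emul g h) x = eact g (eact h x).
Proof. by rewrite /eact /emul /= mulmxDr mulmxA addrAC addrA. Qed.

Lemma eact_one x : eact (eone R n) x = x.
Proof. by rewrite /eact /eone /= mul1mx addr0. Qed.

Lemma eactB g x y : eact g x - eact g y = g.1 *m (x - y).
Proof. by rewrite /eact mulmxBr opprD addrACA subrr addr0. Qed.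

Lemma epowS g m : epow g m.+1 = emul g (epow g m).
Proof. by []. Qed.

Lemma epowD g m (k : nat) : epow g (m + k) = emul (epow g m) (epow g k).
Proof. by elim: m => [|m IH]; rewrite ?emul1g // addSn epowS IH epowS emulA. Qed.

Lemma epowM g m (k : nat) : epow g (m * k) = epow (epow g m) k.
Proof. by elim: k => [|k IH]; rewrite ?muln0 // mulnS epowD IH. Qed.

Lemma epow1 g : epow g 1 = g.
Proof. by rewrite epowS emulg1. Qed.

Lemma epowSr g m : epow g m.+1 = emul (epow g m) g.
Proof. by rewrite -addn1 epowD epow1. Qed.

Lemma epow_rot g m : (epow g m).1 = g.1 ^+ m.
Proof.
elim: m => [|m IH]; first by rewrite expr0.
by rewrite epowS /emul /= IH exprS mulmxE.
Qed.

Lemma epow_fix g m : g.1 *m g.2 = g.2 -> epow g m = (g.1 ^+ m, m%:R *: g.2).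
Proof.
move=> h; elim: m => [|m IH]; first by rewrite expr0 scale0r.
rewrite epowS IH /emul /= exprS mulmxE -scalemxAr -mulmxE h mulrS scalerDl scale1r.
by [].
Qed.

Lemma orth_mul (A B : 'M[R]_n) : orthogonal_mx A -> orthogonal_mx B ->
  orthogonal_mx (A *m B).
Proof.
rewrite /orthogonal_mx => hA hB; rewrite trmx_mul mulmxA -(mulmxA A) hB mulmx1 hA //.
Qed.

Lemma sub_epow (G : set (Eucl R n)) g m : subgroup G -> G g -> G (epow g m).
Proof.
case=> h1 hm _ _ hg; elim: m => [|m IH] //; rewrite epowS; exact: hm.
Qed.

End Basics.

Section ClosedImage.
Variable R : realType.

Lemma small_eq0 (a c : R) : 0 <= c -> (forall eps, 0 < eps -> `|a| <= eps * c) -> a = 0.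
Proof.
move=> c0 h; apply/eqP/negPn/negP => a0.
have pa : 0 < `|a| by rewrite normr_gt0.
have := h (`|a| / (c + 1)) (divr_gt0 pa (ltr_wpDl c0 ltr01)).
rewrite mulrAC ler_pdivlMr ?(ltr_wpDl c0 ltr01) //.
move=> H; nra.
Qed.

Lemma closed_image (p m n : nat) (f : 'rV[R]_p -> 'M[R]_(m, n))
  (flin : forall k x y, f (k *: x + y) = k *: f x + f y) (V : 'M[R]_(m, n)) :
  (forall eps, 0 < eps -> exists x, forall i j, `|V i j - f x i j| <= eps) ->
  exists x, V = f x.
Proof.
move=> hV.
pose g (x : 'rV[R]_p) : 'rV[R]_(m * n) := mxvec (f x).
have f0 : f 0 = 0.
  have := flin 1 0 0; rewrite !scale1r addr0 => h.
  by apply: (addrI (f 0)); rewrite addr0 -h.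
have fsum : forall (I : Type) (r : seq I) (c : I -> R) (x : I -> 'rV_p),
    f (\sum_(i <- r) c i *: x i) = \sum_(i <- r) c i *: f (x i).
  move=> I r c x; elim: r => [|a r IH]; first by rewrite !big_nil.
  by rewrite !big_cons flin IH.
pose M := \matrix_(i < p) g (delta_mx 0 i).
have gM : forall x, g x = x *m M.
  move=> x; rewrite mulmx_sum_row.
  rewrite {1}[x]matrix_sum_delta big_ord1 /g fsum linear_sum; apply: eq_bigr => i _.
  by rewrite linearZ /= /M rowK.
pose K := cokermx M.
have VK : mxvec V *m K = 0.
  apply/matrixP => a b; rewrite [RHS]mxE.
  apply: (@small_eq0 _ (\sum_l `|K l b|)); first by apply: sumr_ge0 => l _.
  move=> eps eps0; have [x hx] := hV eps eps0.
  have -> : mxvec V *m K = (mxvec V - g x) *m K.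
    by rewrite mulmxBl gM -mulmxA mulmx_coker mulmx0 subr0.
  rewrite !mxE mulr_sumr; apply: le_trans (ler_norm_sum _ _ _) _.
  apply: ler_sum => l _; rewrite normrM; apply: ler_wpM2r => //.
  case/mxvec_indexP: l => i j; rewrite (ord1 a) !mxE /g !mxvecE; exact: hx.
have : (mxvec V <= M)%MS by rewrite submxE VK.
case/submxP => D hD; exists D.
by apply: (can_inj (@mxvecK _ _ _)); rewrite hD -gM.
Qed.
End ClosedImage.

Section DistIso.
Variable R : realType.
Variable n : nat.

Lemma sq_le_sqnorm (z : 'cV[R]_n) j : z j 0 ^+ 2 <= sqnorm z.
Proof.
rewrite /sqnorm (bigD1 j) //= lerDl; apply: sumr_ge0 => i _; exact: sqr_ge0.
Qed.

Lemma sqnorm_ge0 (z : 'cV[R]_n) : 0 <= sqnorm z.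
Proof. by apply: sumr_ge0 => i _; exact: sqr_ge0. Qed.

Lemma lin_expr (A S S' : 'M[R]_n) (a a' y : 'cV[R]_n) (k : R) :
  A *m (k *: a + a' + (k *: S + S') *m y) =
  k *: (A *m (a + S *m y)) + A *m (a' + S' *m y).
Proof.
rewrite mulmxDl -scalemxAl !mulmxDr -!scalemxAr scalerDr.
by rewrite -!addrA; congr (_ + _); rewrite addrCA.
Qed.

Lemma dist0_Uiso (x0 : 'cV[R]_n) (Rs : seq (Eucl R n)) v :
  (forall h, h \in Rs -> orthogonal_mx h.1) -> dist_iso x0 Rs v = 0 -> Uiso x0 Rs v.
Proof.
move=> horth hd.
pose m := size Rs.
pose h_ (k : 'I_m) := nth (eone R n) Rs k.
pose pa (x : 'rV[R]_(n + n * n)) : 'cV[R]_n := (lsubmx x)^T.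
pose pX (x : 'rV[R]_(n + n * n)) : 'M[R]_n := vec_mx (rsubmx x).
pose pS x := pX x - (pX x)^T.
pose f (x : 'rV[R]_(n + n * n)) : 'M[R]_(m, n) :=
  \matrix_(k, j) (((h_ k).1^T *m (pa x + pS x *m (eact (h_ k) x0 - x0))) j 0).
have paL : forall k x y, pa (k *: x + y) = k *: pa x + pa y.
  by move=> k x y; rewrite /pa !linearP.
have pSL : forall k x y, pS (k *: x + y) = k *: pS x + pS y.
  move=> k x y; rewrite /pS /pX !linearP /=.
  by rewrite scalerBr scalerN addrACA.
have flin : forall k x y, f (k *: x + y) = k *: f x + f y.
  move=> k x y; apply/matrixP => i j; rewrite [LHS]mxE paL pSL lin_expr.
  by rewrite !mxE.
pose V : 'M[R]_(m, n) := \matrix_(k, j) v (h_ k) j 0.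
pose E := [set Num.sqrt (\sum_(h <- Rs) sqnorm (v h - w h)) | w in Uiso x0 Rs].
have E0 : E !=set0.
  exists (Num.sqrt (\sum_(h <- Rs) sqnorm (v h - 0))); exists (fun _ => 0) => //.
  exists 0; exists 0; first by rewrite /skew_mx trmx0 oppr0.
  by move=> h _; rewrite mulmx0 mul0mx addr0.
have Elb : lbound E 0 by move=> _ [w _ <-]; exact: sqrtr_ge0.
have hE : has_inf E by split => //; exists 0.
have [x hx] : exists x, V = f x.
  apply: closed_image => // eps eps0.
  have [e [w [a [S Sskew hw]] <-] he] := inf_adherent eps0 hE.
  move: he; rewrite /dist_iso in hd; rewrite -/E hd add0r => he.
  pose x := row_mx a^T (mxvec (2^-1 *: S)) : 'rV[R]_(n + n * n).
  exists x => i j.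
  have hpa : pa x = a by rewrite /pa row_mxKl trmxK.
  have hpS : pS x = S.
    rewrite /pS /pX row_mxKr mxvecK linearZ /= Sskew scalerN opprK -scalerDl.
    have -> : (2^-1 + 2^-1 : R) = 1 by field.
    by rewrite scale1r.
  have hi : h_ i \in Rs by rewrite mem_nth.
  have -> : f x i j = w (h_ i) j 0.
    by rewrite /f mxE hpa hpS -hw // mulmxA orthT ?mul1mx //; apply: horth.
  rewrite /V mxE.
  have hsum : sqnorm (v (h_ i) - w (h_ i)) < eps ^+ 2.
    apply: (le_lt_trans (y := \sum_(h <- Rs) sqnorm (v h - w h))).
      rewrite (big_rem (h_ i)) //= lerDl; apply: sumr_ge0 => h _; exact: sqnorm_ge0.
    by rewrite -(ltr_sqrt _ (exprn_gt0 2 eps0)) sqrtr_sqr gtr0_norm.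
  have := le_lt_trans (sq_le_sqnorm _ j) hsum.
  rewrite !mxE => hlt.
  have e0 : 0 <= eps by exact: ltW.
  rewrite ler_norml; apply/andP; split; nra.
exists (pa x); exists (pS x).
  by rewrite /skew_mx /pS linearB /= trmxK opprB.
move=> h hh.
have hk : (index h Rs < m)%N by rewrite index_mem.
have e1 : h_ (Ordinal hk) = h by rewrite /h_ nth_index.
have : v h = (h.1^T *m (pa x + pS x *m (eact h x0 - x0))).
  apply/matrixP => j z; rewrite (ord1 z).
  by have := congr1 (fun M : 'M[R]_(m, n) => M (Ordinal hk) j) hx; rewrite /V /f !mxE e1.
move=> ->; rewrite mulmxA horth // mul1mx //.
Qed.

End DistIso.

Section Propagation.
Variable R : realType.
Variable n : nat.
Variable G : set (Eucl R n).
Variable x0 : 'cV[R]_n.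
Variable Rs : seq (Eucl R n).
Variable u : Eucl R n -> 'cV[R]_n.
Hypothesis sG : subgroup G.
Variables R1 R2 : set (Eucl R n).
Hypothesis RsG : forall h, h \in Rs -> G h.
Hypothesis R1e : R1 (eone R n).
Hypothesis R1gen : generates G R1.
Hypothesis R2p : prop1 G x0 R2.
Hypothesis R12 : forall g h, R1 g -> R2 h -> emul g h \in Rs.

Definition LR g (a : 'cV[R]_n) (S : 'M[R]_n) :=
  forall h, h \in Rs -> h.1 *m u (emul g h) = a + S *m (eact h x0 - x0).

Hypothesis loc : forall g, G g -> exists a S, skew_mx S /\ LR g a S.

Let G1 : G (eone R n). Proof. by case: sG. Qed.
Let GM g h : G g -> G h -> G (emul g h). Proof. by case: sG => _ H _ _; apply: H. Qed.
Let GV g : G g -> G (einv g). Proof. by case: sG => _ _ H _; apply: H. Qed.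
Let GO g : G g -> orthogonal_mx g.1. Proof. by case: sG => _ _ _ H; apply: H. Qed.

Definition Dset (z : 'cV[R]_n) := exists g1 g2, [/\ G g1, G g2 & z = eact g1 x0 - eact g2 x0].
Definition agree (P Q : 'M[R]_n) := forall z, Dset z -> P *m z = Q *m z.

Lemma D_mul g z : G g -> Dset z -> Dset (g.1 *m z).
Proof.
move=> Gg [g1 [g2 [G1' G2' ->]]]; exists (emul g g1), (emul g g2); split; try exact: GM.
by rewrite !eact_mul eactB.
Qed.

Lemma D_orb g : G g -> Dset (eact g x0 - x0).
Proof. by move=> Gg; exists g, (eone R n); rewrite eact_one. Qed.

Lemma eact_eone_sub : eact (eone R n) x0 - x0 = 0.
Proof. by rewrite eact_one subrr. Qed.


Let R2e : R2 (eone R n). Proof. by case: R2p. Qed.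
Let R2G : R2 `<=` G. Proof. by case: R2p. Qed.
Let R1G : R1 `<=` G. Proof. by case: R1gen. Qed.
Let eRs : eone R n \in Rs. Proof. by have := R12 R1e R2e; rewrite emul1g. Qed.
Let R1Rs h : R1 h -> h \in Rs. Proof. by move=> h1; have := R12 h1 R2e; rewrite emulg1. Qed.
Let R2Rs h : R2 h -> h \in Rs. Proof. by move=> h2; have := R12 R1e h2; rewrite emul1g. Qed.

Lemma ext (P Q : 'M[R]_n) :
  (forall h, R2 h -> P *m (eact h x0 - x0) = Q *m (eact h x0 - x0)) -> agree P Q.
Proof.
move=> H.
have orb : forall g, G g -> P *m (eact g x0 - x0) = Q *m (eact g x0 - x0).
  move=> g Gg.
  have : aff_hull (eorbit G x0) (eact g x0).
    exists 1%N, (fun _ => 1), (fun _ => eact g x0); split.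
    - by move=> _; exists g.
    - by rewrite big_ord1.
    - by rewrite big_ord1 scale1r.
  case: R2p => _ _ _ <- [m [c [p [hp hc ->]]]].
  have -> : \sum_i c i *: p i - x0 = \sum_i c i *: (p i - x0).
    under [RHS]eq_bigr => i _ do rewrite scalerBr.
    by rewrite sumrB -scaler_suml hc scale1r.
  rewrite !mulmx_sumr; apply: eq_bigr => i _; rewrite -!scalemxAr.
  by case: (hp i) => h h2 <-; rewrite H.
move=> z [g1 [g2 [G1' G2' ->]]].
have -> : eact g1 x0 - eact g2 x0 = (eact g1 x0 - x0) - (eact g2 x0 - x0).
  by rewrite opprB addrA subrK.
by rewrite [LHS]mulmxBr [RHS]mulmxBr !orb.
Qed.

Lemma LR_u g a S : LR g a S -> u g = a.
Proof.
by move=> H; have := H _ eRs; rewrite emulg1 /eone /= mul1mx eact_eone_sub mulmx0 addr0.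
Qed.

Lemma rel g h' a S a' S' : G g -> R1 h' -> LR g a S -> LR (emul g h') a' S' ->
  h'.1 *m a' = a + S *m (eact h' x0 - x0) /\ agree (h'.1 *m S') (S *m h'.1).
Proof.
move=> Gg h1 L L'.
have ua' := LR_u L'.
have i1 : h'.1 *m a' = a + S *m (eact h' x0 - x0).
  by rewrite -ua' -L ?R1Rs.
split => //; apply: ext => h'' h2.
have e1 := L _ (R12 h1 h2).
have e2 := L' _ (R2Rs h2).
have e3 : a + S *m (eact h' x0 - x0) + h'.1 *m (S' *m (eact h'' x0 - x0)) =
          a + S *m (eact h' x0 - x0) + S *m (h'.1 *m (eact h'' x0 - x0)).
  rewrite -[RHS]addrA -mulmxDr.
  have <- : eact (emul h' h'') x0 - x0 = (eact h' x0 - x0) + h'.1 *m (eact h'' x0 - x0).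
    by rewrite -eactB -eact_mul [RHS]addrC addrA subrK.
  by rewrite -e1 -emulA /emul /= -mulmxA e2 [RHS]mulmxDr i1.
by move/addrI: e3; rewrite !mulmxA.
Qed.


Lemma eact_split g h : eact (emul g h) x0 - x0 = (eact g x0 - x0) + g.1 *m (eact h x0 - x0).
Proof. by rewrite -eactB -eact_mul [RHS]addrC addrA subrK. Qed.

Lemma agreeR (A B C D : 'M[R]_n) : agree (A *m B) (C *m D) ->
  forall z, Dset z -> A *m (B *m z) = C *m (D *m z).
Proof. by move=> H z Dz; rewrite !mulmxA H. Qed.

Definition Inv a0 S0 g := (forall a' S', LR g a' S' -> agree (g.1 *m S') (S0 *m g.1)) /\
  g.1 *m u g = a0 + S0 *m (eact g x0 - x0).

Lemma inv_fwd a0 S0 g h' : G g -> R1 h' -> Inv a0 S0 g -> Inv a0 S0 (emul g h').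
Proof.
move=> Gg h1 [I1 I2].
have Gh := R1G h1.
have [a [S [_ L]]] := loc Gg.
have [a' [S' [_ L']]] := loc (GM Gg Gh).
have [r1 _] := rel Gg h1 L L'.
split.
- move=> a2 S2 L2 z Dz.
  have [_ ag] := rel Gg h1 L L2.
  have E : (emul g h').1 = g.1 *m h'.1 by [].
  by rewrite E -!mulmxA (agreeR ag) // (agreeR (I1 _ _ L)) //; apply: D_mul.
- have E : (emul g h').1 = g.1 *m h'.1 by [].
  rewrite E -mulmxA (LR_u L') r1 mulmxDr -(LR_u L) I2.
  rewrite (agreeR (I1 _ _ L)); last exact: D_orb.
  by rewrite -addrA -mulmxDr -(eact_split g h').
Qed.

Lemma inv_bwd a0 S0 g h' : G g -> R1 h' -> Inv a0 S0 g -> Inv a0 S0 (emul g (einv h')).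
Proof.
move=> Gg h1 [I1 I2].
have Gh := R1G h1.
set k := emul g (einv h').
have Gk : G k by apply: GM => //; apply: GV.
have ek : emul k h' = g by rewrite /k emulA emulVg ?emulg1 //; exact: GO.
have [a [S [_ L]]] := loc Gk.
have [a1 [S1 [_ L1]]] := loc Gg.
have L1' : LR (emul k h') a1 S1 by rewrite ek.
have ii : forall a' S', LR k a' S' -> agree (k.1 *m S') (S0 *m k.1).
  move=> a' S' L' z Dz.
  have [_ ag] := rel Gk h1 L' L1'.
  have Dy : Dset (h'.1^T *m z) by have := D_mul (GV Gh) Dz.
  have hz : h'.1 *m (h'.1^T *m z) = z by rewrite mulmxA GO // mul1mx.
  rewrite -!mulmxA -{1}hz -(agreeR ag) // !mulmxA.
  have kg : k.1 *m h'.1 = g.1 by rewrite -ek.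
  rewrite kg -!mulmxA (agreeR (I1 _ _ L1)) // -{2}hz.
split => //.
have [r1 _] := rel Gk h1 L L1'.
have ea : a = h'.1 *m a1 - S *m (eact h' x0 - x0) by rewrite r1 addrK.
rewrite (LR_u L) ea mulmxBr mulmxA.
have -> : k.1 *m h'.1 = g.1 by rewrite -ek.
rewrite -(LR_u L1) I2 (agreeR (ii _ _ L)) //.
  by rewrite -{1}ek eact_split mulmxDr addrA addrK.
exact: D_orb.
Qed.

Lemma inv_word a0 S0 (l : seq (Eucl R n * bool)) : (forall q, q \in l -> R1 q.1) ->
  forall g, G g -> Inv a0 S0 g -> Inv a0 S0 (emul g (eprod l)).
Proof.
elim: l => [|[p b] l IH] hl g' Gg' Ig'; first by rewrite /eprod /= emulg1.
have hp : R1 p by exact: (hl (p, b) (mem_head _ _)).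
have hl' : forall q, q \in l -> R1 q.1 by move=> q ql; apply: hl; rewrite in_cons ql orbT.
rewrite /= -emulA; case: b {hl}.
- by apply: IH => //; [apply: GM => //; apply: R1G | exact: inv_fwd].
- by apply: IH => //; [apply: GM => //; apply: GV; apply: R1G | exact: inv_bwd].
Qed.

Lemma inv_all a0 S0 : Inv a0 S0 (eone R n) -> forall g, G g -> Inv a0 S0 g.
Proof.
move=> I0 g Gg.
have [_ gen] := R1gen.
have [l [hl ->]] := gen g Gg.
rewrite -(emul1g (eprod l)); exact: inv_word.
Qed.

Lemma main_prop : exists a0 S0, skew_mx S0 /\
  forall g, G g -> g.1 *m u g = a0 + S0 *m (eact g x0 - x0).
Proof.
have [a0 [S0 [sk L0]]] := loc G1.
exists a0, S0; split => //.
suff I0 : Inv a0 S0 (eone R n) by move=> g Gg; case: (inv_all I0 Gg).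
split; last by rewrite eact_eone_sub mulmx0 addr0 (LR_u L0) /eone /= mul1mx.
move=> a' S' L'.
have aa : a' = a0 by rewrite -(LR_u L') (LR_u L0).
rewrite /eone /= mul1mx mulmx1; apply: ext => h h2.
have := L0 _ (R2Rs h2); rewrite (L' _ (R2Rs h2)) aa.
by move/addrI.
Qed.

End Propagation.

Section Exponent.
Variable R : realType.
Variable n : nat.

Lemma seq_exponent (s : seq 'M[R]_n) :
  (forall B, B \in s -> exists2 k, (0 < k)%N & B ^+ k = 1) ->
  exists2 K, (0 < K)%N & forall B, B \in s -> B ^+ K = 1.
Proof.
elim: s => [|B s IH] H; first by exists 1%N.
have [k k0 hk] := H B (mem_head _ _).
have [K K0 hK] : exists2 K, (0 < K)%N & forall B, B \in s -> B ^+ K = 1.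
  by apply: IH => B' hB'; apply: H; rewrite in_cons hB' orbT.
exists (k * K)%N; first by rewrite muln_gt0 k0 K0.
move=> B'; rewrite in_cons => /orP [/eqP -> | hB'].
  by rewrite exprM hk expr1n.
by rewrite mulnC exprM hK // expr1n.
Qed.

Lemma group_exponent (G : set (Eucl R n)) : subgroup G ->
  finite_set [set erot g | g in G] ->
  exists2 K, (0 < K)%N & forall g, G g -> g.1 ^+ K = 1.
Proof.
move=> sG /finite_seqP [s hs].
have Gorth : forall g, G g -> orthogonal_mx g.1 by case: sG.
suff : exists2 K, (0 < K)%N & forall B, B \in s -> B ^+ K = 1.
  case=> K K0 hK; exists K => // g Gg; apply: hK.
  have : [set erot g | g in G] g.1 by exists g.
  by rewrite hs.
apply: seq_exponent => B Bs.
have : [set` s] B by [].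
rewrite -hs => -[g Gg <-].
pose sq := [seq g.1 ^+ j | j <- iota 0 (size s).+1].
have sub : {subset sq <= s}.
  move=> M /mapP [j _ ->].
  have : [set erot g | g in G] (g.1 ^+ j) by exists (epow g j); [exact: sub_epow | rewrite /erot epow_rot].
  by rewrite hs.
have nu : ~~ uniq sq.
  apply/negP => u; have := uniq_leq_size u sub.
  by rewrite size_map size_iota ltnn.
have [i [j [ij js e]]] := uniqPn 0 nu.
move: js e; rewrite size_map size_iota => js.
rewrite !(nth_map 0%N) ?size_iota ?(ltn_trans ij) // !nth_iota ?(ltn_trans ij) // !add0n => e.
exists (j - i)%N; first by rewrite subn_gt0.
have oi : orthogonal_mx (g.1 ^+ i).
  by rewrite -epow_rot; apply: Gorth; exact: sub_epow.
have : (g.1 ^+ i)^T *m g.1 ^+ i *m g.1 ^+ (j - i) = (g.1 ^+ i)^T *m g.1 ^+ i.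
  by rewrite -mulmxA mulmxE -exprD subnKC ?(ltnW ij) // e.
rewrite orthT // mul1mx => ->; by [].
Qed.
End Exponent.

Section Span.
Variable R : realType.
Variable d : nat.

Definition dot k (a b : 'cV[R]_k) := \sum_j a j 0 * b j 0.

Lemma dotC k (a b : 'cV[R]_k) : dot a b = dot b a.
Proof. by apply: eq_bigr => j _; rewrite mulrC. Qed.

Lemma dotBl k (a b c : 'cV[R]_k) : dot (a - b) c = dot a c - dot b c.
Proof. by rewrite /dot -sumrB; apply: eq_bigr => j _; rewrite !mxE mulrBl. Qed.

Lemma dotZl k (x : R) (a b : 'cV[R]_k) : dot (x *: a) b = x * dot a b.
Proof. by rewrite /dot mulr_sumr; apply: eq_bigr => j _; rewrite !mxE mulrA. Qed.

Lemma dotBr k (a b c : 'cV[R]_k) : dot a (b - c) = dot a b - dot a c.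
Proof. by rewrite dotC dotBl !(dotC a). Qed.

Lemma dot_sqnorm k (a : 'cV[R]_k) : dot a a = sqnorm a.
Proof. by apply: eq_bigr => j _; rewrite expr2. Qed.

Lemma two_dot_le k (e w : 'cV[R]_k) : 2 * dot e w <= sqnorm e + sqnorm w.
Proof.
rewrite /dot /sqnorm mulr_sumr -big_split; apply: ler_sum => j _ /=.
set a := e j 0; set b := w j 0; have := sqr_ge0 (a - b); rewrite sqrrB; lra.
Qed.

Lemma sqnorm_eq0 k (a : 'cV[R]_k) : sqnorm a = 0 -> a = 0.
Proof.
move=> h; apply/matrixP => i j; rewrite (ord1 j) mxE.
have := psumr_eq0P (P := predT) (F := fun i => a i 0 ^+ 2) _ h.
move=> H; apply/eqP; rewrite -sqrf_eq0; apply/eqP; apply: H => // l _.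
exact: sqr_ge0.
Qed.

Lemma transl_span (S : set (Eucl R d)) (w : 'cV[R]_d) : space_group S ->
  finite_set [set erot s | s in S] ->
  (forall s, S s -> s.1 = 1%:M -> dot w s.2 = 0) -> w = 0.
Proof.
case=> sS _ [r hr] /finite_seqP [L hL] hw.
have Sorth : forall s, S s -> orthogonal_mx s.1 by case: sS.
have SM : forall s s', S s -> S s' -> S (emul s s') by case: sS.
have SV : forall s, S s -> S (einv s) by case: sS.
have same : forall s s', S s -> S s' -> s.1 = s'.1 -> dot w s.2 = dot w s'.2.
  move=> s s' Ss Ss' e.
  have St := SM _ _ Ss (SV _ Ss').
  have := hw _ St; rewrite /emul /einv /= e Sorth // mulmxN mulmxA Sorth // mul1mx.
  by move=> /(_ erefl) /eqP; rewrite dotBr subr_eq0 => /eqP.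
have [Cm [Cm0 hCm]] : exists Cm, 0 <= Cm /\ forall s, S s -> `|dot w s.2| <= Cm.
  suff : forall L' : seq 'M[R]_d, {subset L' <= L} -> exists Cm, 0 <= Cm /\
      forall s, S s -> s.1 \in L' -> `|dot w s.2| <= Cm.
    case/(_ L (fun x (h : x \in L) => h)) => Cm [Cm0 H]; exists Cm; split => // s Ss; apply: H => //.
    have : [set erot s | s in S] s.1 by exists s.
    by rewrite hL.
  elim=> [|M L' IH] sub; first by exists 0; split => // s _.
  have [Cm [Cm0 H]] : exists Cm, 0 <= Cm /\ forall s, S s -> s.1 \in L' -> `|dot w s.2| <= Cm.
    by apply: IH => x hx; apply: sub; rewrite in_cons hx orbT.
  have : [set erot s | s in S] M by rewrite hL; apply: sub; exact: mem_head.
  case=> sM SsM eM.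
  exists (Cm + `|dot w sM.2|); split; first by rewrite addr_ge0.
  move=> s Ss; rewrite in_cons => /orP [/eqP e | hs].
    rewrite (same s sM) //; last by rewrite e -eM.
    by rewrite lerDr.
  by apply: le_trans (H _ Ss hs) _; rewrite lerDl.
apply/eqP/negPn/negP => w0.
have W0 : 0 < sqnorm w.
  rewrite lt_def sqnorm_ge0 andbT; apply/negP => /eqP h.
  by move/negP: w0; apply; rewrite (sqnorm_eq0 h).
set W := sqnorm w in W0.
pose lam := (r ^+ 2 + W + 2 * Cm + 1) / (2 * W).
have [s Ss hs] := hr (lam *: w).
move: hs; rewrite /eact mulmx0 add0r => hs.
have := two_dot_le (lam *: w - s.2) w.
rewrite dotBl dotZl dot_sqnorm -/W (dotC s.2).
have := hCm _ Ss; rewrite ler_norml => /andP [_ hC].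
have hl : 2 * (lam * W) = r ^+ 2 + W + 2 * Cm + 1.
  rewrite /lam; field; by rewrite gt_eqF.
move=> H; have H3 : sqnorm (lam *: w - s.2) + W <= r ^+ 2 + W by rewrite lerD2r.
have H2 := le_trans H H3; move: H2 hC hl; clear; move=> H2 hC hl; lra.
Qed.
End Span.

Lemma Uiso_dist0 (R : realType) (n : nat) (x0 : 'cV[R]_n) Rs v :
  Uiso x0 Rs v -> dist_iso x0 Rs v = 0.
Proof.
move=> hv.
pose E := [set Num.sqrt (\sum_(h <- Rs) sqnorm (v h - w h)) | w in Uiso x0 Rs].
have E0 : E 0.
  exists v => //; rewrite big1 ?sqrtr0 // => h _.
  by rewrite subrr /sqnorm big1 // => i _; rewrite mxE expr0n.
have lb : lbound E 0 by move=> _ [w _ <-]; exact: sqrtr_ge0.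
apply/eqP; rewrite eq_le; apply/andP; split.
  by apply: ge_inf => //; exists 0.
by apply: lb_le_inf => //; exists 0.
Qed.

Section Setting.
Variable R : realType.
Variables d1 d2 : nat.
Local Notation n := (d1 + d2)%N.
Variable S : set (Eucl R d2).
Variables G T : set (Eucl R n).
Variable C : nat -> seq (Eucl R n).
Variable x0 : 'cV[R]_n.
Variable Rs : seq (Eucl R n).
Hypothesis hS : space_group S.
Hypothesis sG : subgroup G.
Hypothesis hGform : forall g, G g -> exists A : 'M[R]_d1,
      exists2 s, orthogonal_mx A /\ S s & g = dsum A s.
Hypothesis hSproj : forall s, S s -> exists2 g, G g & sproj g = s.
Hypothesis TG : T `<=` G.
Hypothesis Timg : [set sproj t | t in T] = transl_subgroup S.
Hypothesis hm0 : exists2 m0 : nat, (0 < m0)%N &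
     forall N : nat, (0 < N)%N -> (normal_subgroup (powset T N) G <-> (m0 %| N)%N).
Hypothesis hC : forall N, in_M G T N -> reps G (powset T N) (C N).
Hypothesis hfin : finite_set [set erot g | g in G].
Hypothesis hp2 : prop2 G x0 Rs.

Let G1 : G (eone R n). Proof. by case: sG. Qed.
Let GM g h : G g -> G h -> G (emul g h). Proof. by case: sG => _ H _ _; apply: H. Qed.
Let GV g : G g -> G (einv g). Proof. by case: sG => _ _ H _; apply: H. Qed.
Let GO g : G g -> orthogonal_mx g.1. Proof. by case: sG => _ _ _ H; apply: H. Qed.
Let RsG h : h \in Rs -> G h. Proof. by case: hp2 => _ H _; apply: H. Qed.

Lemma sproj_dsum (A : 'M[R]_d1) (s : Eucl R d2) : sproj (dsum A s) = s.
Proof. by case: s => a b; rewrite /sproj /dsum /= block_mxKdr col_mxKd. Qed.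

Lemma finS : finite_set [set erot s | s in S].
Proof.
apply: (sub_finite_set _ (finite_image (fun B : 'M[R]_n => drsubmx B) hfin)).
move=> _ [s Ss <-]; have [g Gg <-] := hSproj Ss.
by exists g.1 => //; exists g.
Qed.

Lemma transl_elt s : S s -> s.1 = 1%:M ->
  exists t A, [/\ T t, orthogonal_mx A & t = (block_mx A 0 0 1%:M, col_mx 0 s.2)].
Proof.
move=> Ss s1.
have : [set sproj t | t in T] s by rewrite Timg.
case=> t Tt ts.
have [A [s' [oA Ss'] et]] := hGform (TG Tt).
move: ts; rewrite et sproj_dsum => es'.
exists t, A; split => //.
by rewrite et /dsum es' s1.
Qed.

Lemma block_fix (A : 'M[R]_d1) (z : 'cV[R]_d2) :
  (block_mx A 0 0 1%:M : 'M[R]_n) *m col_mx 0 z = col_mx 0 z.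
Proof. by rewrite mul_block_col !mulmx0 !mul0mx !addr0 add0r mul1mx. Qed.

Lemma periodic_pow (H : set (Eucl R n)) u P j : periodic G H u -> H P -> G P ->
  u (epow P j) = u (eone R n).
Proof.
move=> per HP GP; elim: j => [|j IH] //.
by rewrite epowSr per //; apply: sub_epow.
Qed.


Lemma S0_kill (S0 : 'M[R]_n) : (forall s, S s -> s.1 = 1%:M -> S0 *m col_mx 0 s.2 = 0) ->
  forall y : 'cV[R]_d2, S0 *m col_mx 0 y = 0.
Proof.
move=> H.
have Erow : forall z : 'cV[R]_d2, S0 *m col_mx 0 z = rsubmx S0 *m z.
  by move=> z; rewrite -{1}(hsubmxK S0) mul_row_col mulmx0 add0r.
suff R0 : rsubmx S0 = 0 by move=> y; rewrite Erow R0 mul0mx.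
apply/matrixP => k j; rewrite mxE.
pose w : 'cV[R]_d2 := (row k (rsubmx S0))^T.
have w0 : w = 0.
  apply: (transl_span hS finS) => s Ss s1.
  have := congr1 (fun M : 'cV[R]_n => M k 0) (H s Ss s1).
  rewrite Erow !mxE => <-; apply: eq_bigr => i _; rewrite !mxE //.
by have := congr1 (fun M : 'cV[R]_d2 => M j 0) w0; rewrite !mxE.
Qed.

Lemma ker_global u : ker_norm G T C x0 Rs u ->
  exists a (S0 : 'M[R]_n), [/\ skew_mx S0, (forall y : 'cV[R]_d2, S0 *m col_mx 0 y = 0) &
    forall g, G g -> g.1 *m u g = a + S0 *m (eact g x0 - x0)].
Proof.
case=> N [inM per hnorm].
have [N0 nTN] := inM.
have [uC CG Crep Cuniq] := hC inM.
have Rsorth : forall h, h \in Rs -> orthogonal_mx h.1 by move=> h /RsG /GO.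
have d0 : forall c, c \in C N -> dist_iso x0 Rs (fun h => u (emul c h)) = 0.
  move: hnorm; rewrite /normR => /eqP; rewrite sqrtr_eq0 => hle.
  set Sg := \sum_(g <- C N) _ in hle.
  have Sg0 : 0 <= Sg by apply: sumr_ge0 => g _; exact: sqr_ge0.
  have sz : (0 < size (C N))%N.
    have [c cC _] := Crep _ G1; by case: (C N) cC.
  have : Sg = 0.
    apply/eqP; rewrite eq_le Sg0 andbT.
    have ip : 0 < (size (C N))%:R^-1 :> R by rewrite invr_gt0 ltr0n.
    by rewrite -(pmulr_rle0 _ ip).
  move=> /eqP; rewrite psumr_eq0; last by move=> g _; exact: sqr_ge0.
  move=> /allP H c cC; have := H c cC; rewrite /= expf_eq0 /= => /eqP //.
have loc : forall g, G g -> exists a S1, skew_mx S1 /\ LR x0 Rs u g a S1.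
  move=> g Gg.
  have [c cC Ht] := Crep _ Gg.
  have [a [S1 sk hU]] := dist0_Uiso Rsorth (d0 c cC).
  exists a, S1; split => // h hRs.
  rewrite -hU //; congr (_ *m _).
  set t := emul (einv c) g in Ht.
  have Gc := CG c cC; have Gh := RsG hRs.
  have [_ _ nor] := nTN.
  have Ht' := nor _ _ (GV Gh) Ht.
  rewrite einvK in Ht'; last exact: GO.
  rewrite -(per _ _ (GM Gc Gh) Ht').
  congr u.
  rewrite !emulA -(emulA h) emulV ?emul1g; last exact: GO.
  by rewrite -emulA /t -emulA emulV ?emul1g //; exact: GO.
case: hp2 => _ _ [R1 [R2 [R1e R1gen R2p R12]]].
have [a0 [S0 [sk glob]]] := main_prop sG R1e R1gen R2p R12 loc.
exists a0, S0; split => //.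
apply: S0_kill => s Ss s1.
have [t0 [A [Tt0 oA et0]]] := transl_elt Ss s1.
have [K K0 hK] := group_exponent sG hfin.
have GP : G (epow t0 N) by apply: sub_epow => //; exact: TG.
have HP : powset T N (epow t0 N) by exists t0.
pose tt := epow (epow t0 N) K.
have utt : u tt = u (eone R n) by rewrite /tt; exact: (periodic_pow _ per HP GP).
have Gtt : G tt by apply: sub_epow.
have ett : tt = (1%:M, (N * K)%:R *: col_mx 0 s.2).
  rewrite /tt -epowM epow_fix; last by rewrite et0 block_fix.
  rewrite exprM exprAC hK; last exact: TG.
  by rewrite expr1n et0.
have a0e : u (eone R n) = a0.
  have := glob _ G1; rewrite eact_one subrr mulmx0 addr0 /eone /= mul1mx //.
have := glob _ Gtt; rewrite utt a0e {1}ett /= mul1mx => /eqP.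
rewrite addrC -subr_eq subrr eq_sym => /eqP.
rewrite ett /eact /= mul1mx addrC addKr -scalemxAr => /eqP.
rewrite scaler_eq0 pnatr_eq0 muln_eq0 => /orP [/orP [] | /eqP //].
  by rewrite eqn0Ngt N0.
by rewrite eqn0Ngt K0.
Qed.


Lemma G_transl t : T t -> exists A s, [/\ orthogonal_mx A, S s, s.1 = 1%:M &
   t = (block_mx A 0 0 1%:M, col_mx 0 s.2)].
Proof.
move=> Tt; have [A [s [oA Ss] et]] := hGform (TG Tt).
have : [set sproj t | t in T] s by exists t => //; rewrite et sproj_dsum.
rewrite Timg => -[_ s1']; have s1 : s.1 = 1%:M := s1'.
by exists A, s; split => //; rewrite et /dsum s1.
Qed.

Lemma rot_col_mx g (z : 'cV[R]_d2) : G g -> exists z', g.1 *m col_mx 0 z = col_mx 0 z'.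
Proof.
move=> Gg; have [A [s [_ _] ->]] := hGform Gg.
by exists (s.1 *m z); rewrite /dsum /= mul_block_col !mulmx0 !mul0mx !addr0 add0r.
Qed.

Lemma iso_ker u : Uiso00 G x0 u -> ker_norm G T C x0 Rs u.
Proof.
case=> a [S1 sk1 hU].
set M := block_mx S1 0 0 (0 : 'M[R]_d2) : 'M[R]_n.
have Mcol : forall z : 'cV[R]_d2, M *m col_mx 0 z = 0.
  by move=> z; rewrite /M mul_block_col !mulmx0 !mul0mx !addr0 col_mx0.
have Mskew : M^T = - M.
  by rewrite /M tr_block_mx sk1 !trmx0 opp_block_mx !oppr0.
have uE : forall x, G x -> u x = x.1^T *m (a + M *m (eact x x0 - x0)).
  by move=> x Gx; rewrite -hU // mulmxA orthT ?mul1mx //; exact: GO.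
have [m0 m00 hm] := hm0.
have [K K0 hK] := group_exponent sG hfin.
have N0 : (0 < m0 * K)%N by rewrite muln_gt0 m00 K0.
have inM : in_M G T (m0 * K) by split => //; apply/(hm _ N0); exact: dvdn_mulr.
exists (m0 * K)%N; split => //.
- move=> g t Gg [t0 Tt0 <-].
  have [A [s [oA Ss s1 et0]]] := G_transl Tt0.
  have Gt0 := TG Tt0.
  have ep : epow t0 (m0 * K) = (1%:M, (m0 * K)%:R *: col_mx 0 s.2).
    rewrite epow_fix; last by rewrite et0 block_fix.
    by rewrite exprM exprAC hK // expr1n et0.
  have Gt : G (epow t0 (m0 * K)) by apply: sub_epow.
  rewrite (uE _ (GM Gg Gt)) (uE _ Gg); congr (_ *m (_ + _)).
    by rewrite ep /emul /= mulmx1.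
  rewrite eact_split mulmxDr; apply: subr0_eq; rewrite addrC addKr.
  rewrite ep /eact /= mul1mx addrC addKr -scalemxAr.
  have [z' ->] := rot_col_mx s.2 Gg.
  by rewrite -?scalemxAr Mcol ?scaler0.
- rewrite /normR big1_seq ?mulr0 ?sqrtr0 // => c cC.
  have [_ CG _ _] := hC inM.
  have Gc := CG c cC.
  rewrite Uiso_dist0 ?expr0n //.
  exists (c.1^T *m (a + M *m (eact c x0 - x0))); exists (c.1^T *m M *m c.1).
    by rewrite /skew_mx !trmx_mul trmxK Mskew mulNmx mulmxN mulmxA.
  move=> h hRs.
  have Gh := RsG hRs.
  rewrite (uE _ (GM Gc Gh)).
  have -> : (emul c h).1 = c.1 *m h.1 by [].
  rewrite trmx_mul !mulmxA (GO Gh) mul1mx eact_split !mulmxDr addrA.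
  by rewrite !mulmxA.
Qed.

End Setting.

Lemma mx_eq_of_mul (R : realType) m k (A B : 'M[R]_(m, k)) :
  (forall z : 'cV[R]_k, A *m z = B *m z) -> A = B.
Proof.
move=> H; apply/matrixP => i j.
have := congr1 (fun M : 'cV[R]_m => M i 0) (H (delta_mx j 0)).
by rewrite -!colE !mxE.
Qed.

Section PhiSec.
Variable R : realType.
Variables d3 d4 d2 : nat.
Local Notation n := ((d3 + d4) + d2)%N.

Definition Mof (A1 : 'M[R]_(d3, d4)) (A2 : 'M[R]_d4) : 'M[R]_n :=
  block_mx (block_mx 0 A1 (- A1^T) A2) 0 0 (0 : 'M[R]_d2).

Lemma PhiE (x0 a : 'cV[R]_n) A1 A2 g :
  Phi x0 a A1 A2 g = g.1^T *m (a + Mof A1 A2 *m (eact g x0 - x0)).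
Proof. by []. Qed.

Lemma Mof_lin (k : R) A1 A1' A2 A2' :
  Mof (k *: A1 + A1') (k *: A2 + A2') = k *: Mof A1 A2 + Mof A1' A2'.
Proof.
rewrite /Mof scale_block_mx add_block_mx scale_block_mx add_block_mx.
by rewrite !scaler0 !addr0 linearP /= scalerN opprD.
Qed.

Lemma Phi_lin (x0 : 'cV[R]_n) (k : R) a a' A1 A1' A2 A2' g :
  Phi x0 (k *: a + a') (k *: A1 + A1') (k *: A2 + A2') g
  = k *: Phi x0 a A1 A2 g + Phi x0 a' A1' A2' g.
Proof. by rewrite !PhiE Mof_lin lin_expr. Qed.

Lemma inner_skew (A1 : 'M[R]_(d3, d4)) A2 : skew_mx A2 -> skew_mx (block_mx 0 A1 (- A1^T) A2).
Proof.
rewrite /skew_mx => sk; rewrite tr_block_mx opp_block_mx sk trmx0 oppr0 linearN /= trmxK.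
by rewrite opprK.
Qed.

Lemma Phi_Uiso00 (G : set (Eucl R n)) x0 a A1 A2 : skew_mx A2 ->
  (forall g, G g -> orthogonal_mx g.1) -> Uiso00 G x0 (Phi x0 a A1 A2).
Proof.
move=> sk GO; exists a; exists (block_mx 0 A1 (- A1^T) A2); first exact: inner_skew.
by move=> g Gg; rewrite PhiE mulmxA GO // mul1mx.
Qed.


Lemma blockeq (S1 : 'M[R]_(d3 + d4)) (y4 : 'cV[R]_d4) (y2 : 'cV[R]_d2) :
  block_mx S1 0 0 (0 : 'M[R]_d2) *m col_mx (col_mx 0 y4) y2
  = Mof (ursubmx S1) (drsubmx S1) *m col_mx (col_mx 0 y4) y2.
Proof.
rewrite /Mof !mul_block_col -{1}(submxK S1) !mul_block_col.
by rewrite !mulmx0 !mul0mx !addr0 !add0r.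
Qed.

Lemma y_decomp (G : set (Eucl R n)) x0 g : G (eone R n) -> G g ->
  (forall g, G g -> forall i : 'I_n, (i < d3)%N -> eact g x0 i 0 = 0) ->
  eact g x0 - x0 = col_mx (col_mx 0 (dsubmx (usubmx (eact g x0 - x0)))) (dsubmx (eact g x0 - x0)).
Proof.
move=> G1 Gg hc.
have h1 := hc _ G1; rewrite eact_one in h1.
have hg := hc _ Gg; set eg := eact g x0 in hg *; clearbody eg.
set y := eg - x0.
have u0 : usubmx (usubmx y) = 0.
  apply/matrixP => i j; rewrite (ord1 j) !mxE.
  have hi : (lshift d2 (lshift d4 i) < d3)%N by rewrite /= ltn_ord.
  by rewrite hg // h1 // subrr.
by rewrite -u0 !vsubmxK.
Qed.

Lemma Uiso00_Phi (G : set (Eucl R n)) x0 u : G (eone R n) ->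
  (forall g, G g -> orthogonal_mx g.1) ->
  (forall g, G g -> forall i : 'I_n, (i < d3)%N -> eact g x0 i 0 = 0) ->
  Uiso00 G x0 u -> exists a A1, exists2 A2, skew_mx A2 & forall g, G g -> u g = Phi x0 a A1 A2 g.
Proof.
move=> G1 GO hc [a [S1 sk hU]].
exists a, (ursubmx S1); exists (drsubmx S1).
  by rewrite /skew_mx trmx_drsub sk; apply/matrixP => i j; rewrite !mxE.
move=> g Gg.
have -> : u g = g.1^T *m (g.1 *m u g) by rewrite mulmxA orthT ?mul1mx //; apply: GO.
rewrite hU // PhiE (y_decomp G1 Gg hc) blockeq //.
Qed.

Lemma ker_to_Uiso00 (G : set (Eucl R n)) x0 u a (S0 : 'M[R]_n) :
  skew_mx S0 -> (forall y : 'cV[R]_d2, S0 *m col_mx 0 y = 0) ->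
  (forall g, G g -> g.1 *m u g = a + S0 *m (eact g x0 - x0)) -> Uiso00 G x0 u.
Proof.
move=> sk kill glob.
have R0 : rsubmx S0 = 0.
  apply: mx_eq_of_mul => z; rewrite mul0mx -(kill z).
  by rewrite -{2}(hsubmxK S0) mul_row_col mulmx0 add0r.
have E0 : S0 = block_mx (ulsubmx S0) 0 0 (0 : 'M[R]_d2).
  rewrite -{1}(submxK S0); congr block_mx.
  - apply/matrixP => i j; have := congr1 (fun M : 'M[R]_(_, d2) => M (lshift _ i) j) R0.
    by rewrite !mxE.
  - apply/matrixP => i j; have := congr1 (fun M : 'M[R]_(_, d2) => M (lshift _ j) i) R0.
    have := congr1 (fun M : 'M[R]_n => M (rshift _ i) (lshift _ j)) sk.
    by rewrite !mxE => e1 e2; move: e1; rewrite e2 => /eqP; rewrite eq_sym oppr_eq0; move/eqP.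
  - apply/matrixP => i j; have := congr1 (fun M : 'M[R]_(_, d2) => M (rshift _ i) j) R0.
    by rewrite !mxE.
exists a; exists (ulsubmx S0).
  by rewrite /skew_mx trmx_ulsub sk; apply/matrixP => i j; rewrite !mxE.
by move=> g Gg; rewrite glob // {1}E0.
Qed.


Lemma span_W (G : set (Eucl R n)) x0 (L : 'M[R]_n) : G (eone R n) ->
  (forall g, G g -> forall i : 'I_n, (i < d3)%N -> eact g x0 i 0 = 0) ->
  aff_dim (eorbit G x0) (d4 + d2) ->
  (forall g, G g -> L *m (eact g x0 - x0) = 0) ->
  forall (y4 : 'cV[R]_d4) (y2 : 'cV[R]_d2), L *m col_mx (col_mx 0 y4) y2 = 0.
Proof.
move=> G1 hc [a0 [b [indep haff]]] hL y4 y2.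
have x0c : forall j : 'I_n, (j < d3)%N -> x0 j 0 = 0.
  by move=> j hj; rewrite -(eact_one x0) hc.
pose Q (z : 'cV[R]_n) := L *m z = 0 /\ forall j : 'I_n, (j < d3)%N -> z j 0 = 0.
have QB : forall z z', Q z -> Q z' -> Q (z - z').
  move=> z z' [h1 h2] [h1' h2']; split; first by rewrite mulmxBr h1 h1' subrr.
  by move=> j hj; rewrite !mxE h2 // h2' // subrr.
have Qaff : forall p, aff_hull (eorbit G x0) p -> Q (p - x0).
  move=> _ [m [c [p [hp hc1 ->]]]].
  have -> : \sum_i c i *: p i - x0 = \sum_i c i *: (p i - x0).
    under [RHS]eq_bigr => i _ do rewrite scalerBr.
    by rewrite sumrB -scaler_suml hc1 scale1r.
  split.
    rewrite mulmx_sumr big1 // => i _; rewrite -scalemxAr.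
    by case: (hp i) => g Gg <-; rewrite hL // scaler0.
  move=> j hj; rewrite summxE big1 // => i _.
  case: (hp i) => g Gg e; rewrite !mxE -e hc // x0c // subrr mulr0 //.
have Qb : forall i, Q (b i).
  move=> i.
  have h0 : aff_hull (eorbit G x0) a0.
    rewrite haff; exists (fun _ => 0) => //; rewrite big1 ?addr0 // => l _; exact: scale0r.
  have h1 : aff_hull (eorbit G x0) (a0 + b i).
    rewrite haff; exists (fun l => (l == i)%:R) => //; congr (_ + _).
    rewrite (bigD1 i) //= eqxx scale1r big1 ?addr0 // => l /negbTE ->; exact: scale0r.
  have := QB _ _ (Qaff _ h1) (Qaff _ h0).
  by rewrite opprB addrA subrK addrC addKr.
pose k := (d4 + d2)%N.
have shP : forall l : 'I_k, (d3 + l < n)%N.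
  by move=> l; rewrite -addnA ltn_add2l ltn_ord.
pose sh (l : 'I_k) : 'I_n := Ordinal (shP l).
have shS : forall j : 'I_n, ~~ (j < d3)%N -> exists l, j = sh l.
  move=> j; rewrite -leqNgt => hj.
  have hl : (j - d3 < k)%N.
    by rewrite ltn_subLR // addnA ltn_ord.
  by exists (Ordinal hl); apply: val_inj; rewrite /= subnKC.
pose B' : 'M[R]_k := \matrix_(i, l) b i (sh l) 0.
have Bfree : row_free B'.
  apply: inj_row_free => v hv.
  have w0 : \sum_i v 0 i *: b i = 0.
    apply/matrixP => j z; rewrite (ord1 z) summxE [RHS]mxE.
    case: (boolP (j < d3)%N) => hj.
      by rewrite big1 // => i _; rewrite mxE (proj2 (Qb i)) // mulr0.
    have [l ->] := shS j hj.
    have := congr1 (fun M : 'rV[R]_k => M 0 l) hv; rewrite !mxE => e.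
    rewrite -[X in _ = X]e; apply: eq_bigr => i _; rewrite !mxE //.
  apply/matrixP => z i; rewrite (ord1 z) mxE; exact: (indep (fun i => v 0 i) w0 i).
have Bu : B' \in unitmx by rewrite -row_free_unit.
set y := col_mx (col_mx 0 y4) y2.
have yc : forall j : 'I_n, (j < d3)%N -> y j 0 = 0.
  move=> j hj.
  have -> : j = lshift d2 (lshift d4 (Ordinal hj)) by apply: val_inj.
  by rewrite /y col_mxEu col_mxEu mxE.
pose y' : 'rV[R]_k := \row_l y (sh l) 0.
pose x := y' *m invmx B'.
have xB : x *m B' = y' by rewrite /x mulmxKV.
have ey : y = \sum_i x 0 i *: b i.
  apply/matrixP => j z; rewrite (ord1 z) summxE.
  case: (boolP (j < d3)%N) => hj.
    by rewrite yc // big1 // => i _; rewrite mxE (proj2 (Qb i)) // mulr0.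
  have [l ->] := shS j hj.
  have := congr1 (fun M : 'rV[R]_k => M 0 l) xB; rewrite !mxE => <-.
  by apply: eq_bigr => i _; rewrite !mxE.
rewrite ey mulmx_sumr big1 // => i _; rewrite -scalemxAr (proj1 (Qb i)) scaler0 //.
Qed.

Lemma Mof_col (A1 : 'M[R]_(d3, d4)) A2 (y4 : 'cV[R]_d4) :
  Mof A1 A2 *m col_mx (col_mx 0 y4) 0 = col_mx (col_mx (A1 *m y4) (A2 *m y4)) 0.
Proof.
by rewrite /Mof !mul_block_col !mulmx0 !mul0mx !addr0 !add0r.
Qed.

Lemma Phi_inj (G : set (Eucl R n)) x0 : G (eone R n) ->
  (forall g, G g -> orthogonal_mx g.1) ->
  (forall g, G g -> forall i : 'I_n, (i < d3)%N -> eact g x0 i 0 = 0) ->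
  aff_dim (eorbit G x0) (d4 + d2) ->
  forall a A1 A2 a' A1' A2', (forall g, G g -> Phi x0 a A1 A2 g = Phi x0 a' A1' A2' g) ->
  [/\ a = a', A1 = A1' & A2 = A2'].
Proof.
move=> G1 GO hc haff a A1 A2 a' A1' A2' H.
have ea : a = a'.
  have := H _ G1; rewrite !PhiE eact_one subrr !mulmx0 !addr0 /eone /= trmx1 !mul1mx //.
have hM : forall g, G g -> (Mof A1 A2 - Mof A1' A2') *m (eact g x0 - x0) = 0.
  move=> g Gg; have := congr1 (mulmx g.1) (H g Gg); rewrite !PhiE !mulmxA GO // !mul1mx ea.
  by move/addrI => e; rewrite mulmxBl e subrr.
have sp := span_W G1 hc haff hM.
have e : forall y4 : 'cV[R]_d4, A1 *m y4 = A1' *m y4 /\ A2 *m y4 = A2' *m y4.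
  move=> y4; have := sp y4 0; rewrite mulmxBl Mof_col Mof_col => /eqP; rewrite subr_eq0 => /eqP.
  by case/eq_col_mx => /eq_col_mx [-> ->].
split => //; apply: mx_eq_of_mul => z; by case: (e z).
Qed.

End PhiSec.

Section Pairs.
Variable R : realType.
Variable m : nat.

Definition PP := {j : 'I_m & 'I_j}.

Definition low (p : PP) : 'I_m := widen_ord (ltnW (ltn_ord (tag p))) (tagged p).

Lemma low_lt p : (low p < tag p)%N.
Proof. by rewrite /low /= ltn_ord. Qed.

Lemma lowtag_inj p q : low p = low q -> tag p = tag q -> p = q.
Proof.
case: p => j i; case: q => j' i' /= hl ht; subst j'.
congr existT; apply: val_inj; by have := congr1 val hl.
Qed.

Lemma card_PP : #|{: PP}| = (m * m.-1)./2.
Proof.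
rewrite card_tagged -bin2 -bin2_sum big_mkord sumnE big_map.
rewrite big_enum /=; apply: eq_bigr => j _; by rewrite card_ord.
Qed.

Definition Epp (p : PP) : 'M[R]_m := delta_mx (low p) (tag p) - delta_mx (tag p) (low p).

Lemma Epp_skew p : skew_mx (Epp p).
Proof. by rewrite /skew_mx /Epp linearB /= !trmx_delta opprB. Qed.

Lemma sumE_low (f : PP -> R) q : (\sum_p f p *: Epp p) (low q) (tag q) = f q.
Proof.
rewrite summxE (bigD1 q) //= big1 ?addr0.
  rewrite !mxE !eqxx /= (_ : (low q == tag q) = false) ?subr0 ?mulr1 //.
  by apply: negbTE; rewrite neq_ltn low_lt.
move=> p pq; rewrite !mxE.
have -> : (low q == tag p) && (tag q == low p) = false.
  apply/negbTE/negP => /andP [/eqP e1 /eqP e2].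
  have := low_lt p; have := low_lt q; rewrite e1 -e2 => h1 h2.
  by have := ltn_trans h1 h2; rewrite ltnn.
case: (boolP ((low q == low p) && (tag q == tag p))) => [/andP [/eqP e1 /eqP e2]|] /=.
  by move: pq; rewrite (lowtag_inj e1 e2) eqxx.
by rewrite subrr mulr0.
Qed.

Lemma skew_entry (A : 'M[R]_m) : skew_mx A -> forall r s, A r s = - A s r.
Proof. by move=> sk r s; have := congr1 (fun M : 'M[R]_m => M s r) sk; rewrite !mxE. Qed.

Lemma sumE_skew (f : PP -> R) : skew_mx (\sum_p f p *: Epp p).
Proof.
rewrite /skew_mx linear_sum /= -sumrN; apply: eq_bigr => p _.
by rewrite linearZ /= Epp_skew scalerN.
Qed.

Lemma sumE_recon (A : 'M[R]_m) : skew_mx A -> \sum_p A (low p) (tag p) *: Epp p = A.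
Proof.
move=> sk; set B := \sum_p _.
have skB : skew_mx B := sumE_skew _.
apply/matrixP => r s.
case: (ltngtP r s) => h.
- pose q : PP := Tagged (fun j : 'I_m => 'I_j) (Ordinal h : 'I_s).
  have lq : low q = r by apply: val_inj.
  have tq : tag q = s by [].
  by rewrite -{1}lq -{1}tq sumE_low lq.
- pose q : PP := Tagged (fun j : 'I_m => 'I_j) (Ordinal h : 'I_r).
  have lq : low q = s by apply: val_inj.
  have tq : tag q = r by [].
  rewrite (skew_entry skB) -{1}lq -{1}tq sumE_low lq tq.
  by rewrite [RHS](skew_entry sk).
- have e : r = s by apply: val_inj.
  subst s.
  have z : forall M : 'M[R]_m, skew_mx M -> M r r = 0.
    move=> M sM; have := skew_entry sM r r => /eqP; rewrite -addr_eq0 -mulr2n.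
    by rewrite -mulr_natr mulf_eq0 pnatr_eq0 orbF => /eqP.
  by rewrite !z.
Qed.
End Pairs.

Lemma lin_sum (R : realType) (I : finType) (V : lmodType R) (X : (I -> R) -> V) :
  (forall k c c', X (fun j => k * c j + c' j) = k *: X c + X c') ->
  forall c, \sum_i c i *: X (fun j => (j == i)%:R) = X c.
Proof.
move=> lin c.
have X0 : X (fun _ => 0) = 0.
  have := lin 1 (fun _ => 0) (fun _ => 0); rewrite scale1r.
  have -> : (fun _ : I => 1 * 0 + 0) = (fun _ => 0 :> R) by apply: funext => j; rewrite mulr0 addr0.
  by move=> h; apply: (addrI (X (fun _ => 0))); rewrite addr0 -h.
have H : forall r : seq I, \sum_(i <- r) c i *: X (fun j => (j == i)%:R)
           = X (fun j => \sum_(i <- r) c i * (j == i)%:R).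
  elim=> [|i r IH]; first by rewrite big_nil; under eq_fun do rewrite big_nil.
  rewrite big_cons IH -lin; congr X; apply: funext => j; by rewrite big_cons.
rewrite H; congr X; apply: funext => j.
rewrite (bigD1 j) //= eqxx mulr1 big1 ?addr0 // => i /negbTE ij.
by rewrite eq_sym ij mulr0.
Qed.

Section Basis.
Variable R : realType.
Variables d3 d4 d2 : nat.
Local Notation n := ((d3 + d4) + d2)%N.
Local Notation np := #|{: PP d4}|.
Local Notation K' := (n + (d3 * d4 + np))%N.

Definition ca (c : 'I_K' -> R) : 'cV[R]_n := \col_i c (lshift _ i).
Definition cA1 (c : 'I_K' -> R) : 'M[R]_(d3, d4) :=
  vec_mx (\row_k c (rshift n (lshift np k))).
Definition cA2 (c : 'I_K' -> R) : 'M[R]_d4 :=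
  \sum_(p : PP d4) c (rshift n (rshift (d3 * d4) (enum_rank p))) *: Epp R p.

Definition coord (a : 'cV[R]_n) (A1 : 'M[R]_(d3, d4)) (A2 : 'M[R]_d4) (i : 'I_K') : R :=
  match split i with
  | inl j => a j 0
  | inr i2 => match split i2 with
              | inl k => mxvec A1 0 k
              | inr q => A2 (low (enum_val q)) (tag (enum_val q))
              end
  end.

Lemma ca_lin k c c' : ca (fun j => k * c j + c' j) = k *: ca c + ca c'.
Proof. by apply/matrixP => i j; rewrite !mxE. Qed.

Lemma cA1_lin k c c' : cA1 (fun j => k * c j + c' j) = k *: cA1 c + cA1 c'.
Proof.
rewrite /cA1 -linearP /=; congr vec_mx; apply/matrixP => i j; by rewrite !mxE.
Qed.

Lemma cA2_lin k c c' : cA2 (fun j => k * c j + c' j) = k *: cA2 c + cA2 c'.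
Proof.
rewrite /cA2 scaler_sumr -big_split; apply: eq_bigr => p _.
by rewrite scalerA scalerDl.
Qed.

Lemma coord_params c : coord (ca c) (cA1 c) (cA2 c) = c.
Proof.
apply: funext => i; rewrite -[i]splitK; case: (split i) => [j|i2]; rewrite /coord unsplitK /=.
  by rewrite mxE.
rewrite -[i2]splitK; case: (split i2) => [k|q]; rewrite unsplitK /=.
  by rewrite /cA1 vec_mxK mxE.
by rewrite /cA2 sumE_low enum_valK.
Qed.

Lemma params_coord a A1 A2 : skew_mx A2 ->
  [/\ ca (coord a A1 A2) = a, cA1 (coord a A1 A2) = A1 & cA2 (coord a A1 A2) = A2].
Proof.
move=> sk; split.
- apply/matrixP => i j; rewrite (ord1 j) mxE /coord.
  by rewrite (unsplitK (inl _ i)).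
- rewrite /cA1 -[RHS]mxvecK; congr vec_mx; apply/matrixP => z k.
  by rewrite (ord1 z) mxE /coord (unsplitK (inr _ _)) (unsplitK (inl _ k)).
- rewrite /cA2 -[RHS](sumE_recon sk); apply: eq_bigr => p _.
  by rewrite /coord (unsplitK (inr _ _)) (unsplitK (inr _ _)) enum_rankK.
Qed.

Lemma coord0 : coord 0 0 0 = (fun _ => 0).
Proof.
apply: funext => i; rewrite /coord.
case: (split i) => [j|i2]; first by rewrite mxE.
case: (split i2) => [k|q]; by rewrite ?linear0 mxE.
Qed.

End Basis.

Lemma Phi_zero (R : realType) d3 d4 d2 (x0 : 'cV[R]_((d3 + d4) + d2)) g :
  Phi x0 0 (0 : 'M[R]_(d3, d4)) (0 : 'M[R]_d4) g = 0.
Proof.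
by rewrite PhiE /Mof trmx0 oppr0 !block_mx0 mul0mx addr0 mulmx0.
Qed.

Unset Implicit Arguments.
Set Strict Implicit.
Theorem corollary3p28 (R : realType) (d3 d4 d2 : nat)
  (S : set (Eucl R d2))
  (G T : set (Eucl R ((d3 + d4) + d2)))
  (C : nat -> seq (Eucl R ((d3 + d4) + d2)))
  (x0 : 'cV[R]_((d3 + d4) + d2))
  (Rs : seq (Eucl R ((d3 + d4) + d2))) :
  space_group S ->
  subgroup G -> discrete_set G ->
  (forall g, G g -> exists A : 'M[R]_(d3 + d4),
      exists2 s, orthogonal_mx A /\ S s & g = dsum A s) ->
  (forall s, S s -> exists2 g, G g & sproj g = s) ->
  T `<=` G ->
  (forall t1 t2, T t1 -> T t2 -> sproj t1 = sproj t2 -> t1 = t2) ->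
  [set sproj t | t in T] = transl_subgroup S ->
  (exists2 m0 : nat, (0 < m0)%N &
     forall N : nat, (0 < N)%N -> (normal_subgroup (powset T N) G <-> (m0 %| N)%N)) ->
  (forall N, in_M G T N -> reps G (powset T N) (C N)) ->
  (forall g h, G g -> G h -> eact g x0 = eact h x0 -> g = h) ->
  aff_dim (eorbit G x0) (d4 + d2) ->
  (forall g, G g -> forall i : 'I_((d3 + d4) + d2), (i < d3)%N -> eact g x0 i ord0 = 0) ->
  (forall g, G g -> forall y : 'cV[R]_((d3 + d4) + d2),
      (forall i : 'I_((d3 + d4) + d2), (d3 <= i)%N -> y i ord0 = 0) -> erot g *m y = y) ->
  finite_set [set erot g | g in G] ->
  prop2 G x0 Rs ->
  (forall u, ker_norm G T C x0 Rs u <-> Uiso00 G x0 u) /\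
  [/\ (forall (k : R) a a' A1 A1' A2 A2' g,
          Phi x0 (k *: a + a') (k *: A1 + A1') (k *: A2 + A2') g
          = k *: Phi x0 a A1 A2 g + Phi x0 a' A1' A2' g),
      (forall a A1 A2, skew_mx A2 -> ker_norm G T C x0 Rs (Phi x0 a A1 A2)),
      (forall a A1 A2 a' A1' A2', skew_mx A2 -> skew_mx A2' ->
          (forall g, G g -> Phi x0 a A1 A2 g = Phi x0 a' A1' A2' g) ->
          [/\ a = a', A1 = A1' & A2 = A2']),
      (forall u, ker_norm G T C x0 Rs u ->
          exists a A1, exists2 A2, skew_mx A2 & forall g, G g -> u g = Phi x0 a A1 A2 g) &
      fun_space_dim G (ker_norm G T C x0 Rs)
        (((d3 + d4) + d2) + (d4 * (d3 + (d3 + d4) - 1)) %/ 2)].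
Proof.
move=> hS sG hdisc hGform hSproj TG Tinj Timg hm0 hC hinj haff hc htriv hfin hp2.
have G1 : G (eone R _) by case: sG.
have GO : forall g, G g -> orthogonal_mx g.1 by case: sG.
have ker_iso : forall u, ker_norm G T C x0 Rs u -> Uiso00 G x0 u.
  move=> u Hu.
  have [a [S0 [sk kill glob]]] := ker_global hS sG hGform hSproj TG Timg hC hfin hp2 Hu.
  exact: (ker_to_Uiso00 (d3 := d3) sk kill glob).
have iso_ker' : forall u, Uiso00 G x0 u -> ker_norm G T C x0 Rs u.
  by move=> u; apply: (iso_ker sG hGform TG Timg hm0 hC hfin hp2).
have inker : forall a A1 A2, skew_mx A2 -> ker_norm G T C x0 Rs (Phi x0 a A1 A2).
  by move=> a A1 A2 sk; apply: iso_ker'; apply: Phi_Uiso00.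
have repr : forall u, ker_norm G T C x0 Rs u ->
    exists a A1, exists2 A2, skew_mx A2 & forall g, G g -> u g = Phi x0 a A1 A2 g.
  by move=> u Hu; apply: (Uiso00_Phi G1 GO hc); apply: ker_iso.
split.
  by move=> u; split; [apply: ker_iso | apply: iso_ker'].
split.
- by move=> k a a' A1 A1' A2 A2' g; apply: Phi_lin.
- exact: inker.
- by move=> a A1 A2 a' A1' A2' _ _ H; apply: (Phi_inj G1 GO hc haff H).
- exact: repr.
have eK : (((d3 + d4) + d2) + (d4 * (d3 + (d3 + d4) - 1)) %/ 2
          = ((d3 + d4) + d2) + (d3 * d4 + #|{: PP d4}|))%N.
  by rewrite card_PP -divn2; nia.
rewrite eK.
pose b (i : 'I_(((d3 + d4) + d2) + (d3 * d4 + #|{: PP d4}|))) :=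
  fun g => Phi x0 (ca (fun j => (j == i)%:R)) (cA1 (fun j => (j == i)%:R))
             (cA2 (fun j => (j == i)%:R)) g.
have comb : forall c g, \sum_i c i *: b i g = Phi x0 (ca c) (cA1 c) (cA2 c) g.
  move=> c g; rewrite /b.
  apply: (lin_sum (X := fun c => Phi x0 (ca c) (cA1 c) (cA2 c) g)) => k c1 c2.
  by rewrite ca_lin cA1_lin cA2_lin Phi_lin.
exists b; split.
- move=> c.
  have -> : (fun g => \sum_i c i *: b i g) = Phi x0 (ca c) (cA1 c) (cA2 c).
    by apply: funext => g; rewrite comb.
  apply: inker; exact: sumE_skew.
- move=> c H.
  have H' : forall g, G g -> Phi x0 (ca c) (cA1 c) (cA2 c) g = Phi x0 0 0 0 g.
    by move=> g Gg; rewrite -comb H // Phi_zero.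
  have [e1 e2 e3] := Phi_inj G1 GO hc haff H'.
  move=> i; have := coord_params c; rewrite e1 e2 e3 coord0 => <- //.
- move=> u Hu; have [a [A1 [A2 sk hu]]] := repr u Hu.
  exists (coord a A1 A2) => g Gg; rewrite comb hu //.
  by case: (params_coord a A1 sk) => -> -> ->.
Qed.
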